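(* Let $u$ and $v$ be vertices of $G$ such that $u$ is neither an ancestor nor a descendant of $v$. Suppose the set $X$ of Case 3 of the routing algorithm (the vertices of $C_{T^u}$ that are ancestors of $v$ and not ancestors of $u$) is empty. Then the vertices visited when executing the routing steps of Case 3 a) lie on the path in $T$ from $u$ to $v$, and they are visited in the order in which they appear on this path.
   Context: Let $T$ be a rooted tree on $n$ vertices with positive edge weights; $P(a,b)$ is the path in $T$ from $a$ to $b$ and $\delta_T(a,b)$ its weight. Ancestor/descendant refer to $T$, and a vertex counts as its own ancestor and descendant; ''deepest''/''highest'' refer to depth in $T$. $T_v$ is the subtree of $T$ rooted at $v$. For every non-leaf vertex $v$ fix a child $c_1(v)$ with $|T_{c_1(v)}|$ maximal; edges $(v,c_1(v))$ are leftmost. A subtree $R$ of $T$ is rooted at its vertex closest to the root, $rt(R)$, and inherits the leftmost labelling; $R_v$ is the subtree of $R$ rooted at $v$. $P_R(v)$ is the longest downward path from $v$ in $R$ using only leftmost edges, with last vertex $l(v)$; $l(R):=l(rt(R))$. A vertex $v$ of $R$ is $d$-balanced if $|R_{c_1(v)}|\le |R|-d$ (with $|R_{c_1(v)}|=0$ if $c_1(v)$ is undefined or not in $R$); $b_d(v)$ is the first $d$-balanced vertex on $P_R(v)$, or NULL. $CV(R,d)=\emptyset$ if $b_d(rt(R))$ is NULL, else $\{b\}\cup\bigcup_w CV(R_w,d)$ with $b=b_d(rt(R))$ and $w$ ranging over children of $b$ in $R$. Fix an integer $k\ge4$; for a subtree $R$ with $m$ vertices, $C_R=V(R)$ if $k\ge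 m/2-1$, else $C_R=CV(R,m/k)\cup\{l(R),rt(R)\}$. Canonical subtrees: $T$ is canonical; if $R$ is canonical, each component of $R$ minus $C_R$ is canonical. Each vertex $v$ lies in $C_R$ for exactly one canonical $R$, denoted $T^v$. The spanner $G$ has vertex set $V(T)$ and edges: all edges of $T$, and all pairs of distinct vertices of $C_R$ for every canonical $R$; edge $(a,b)$ has weight $\delta_T(a,b)$. Routing algorithm from current vertex $u$ to destination $v$: Case 0: if $v$ is adjacent to $u$, move to $v$. Case 1: $u$ is an ancestor of $v$; let $X$ be the vertices of $C_{T^u}$ that are ancestors of $v$, $x$ the deepest; move to $x$, then to the child of $x$ that is an ancestor of $v$. Case 2: $u$ is a descendant of $v$; let $X$ be the vertices of $C_{T^u}$ that are descendants of $v$ and ancestors of $u$, $x$ the highest; move to $x$, then to the parent of $x$. Case 3: $u$ is neither; let $X$ be the vertices of $C_{T^u}$ that are ancestors of $v$ but not of $u$, and $Y$ those that are ancestors of $u$ but not of $v$, $y$ the highest vertex of $Y$. Case 3 a): $X=\emptyset$: move to $y$, then to the parent of $y$. Case 3 b): $X\neq\emptyset$: with $x$ the deepest vertex of $X$ and $x'$ the child of $x$ that is an ancestor of $v$, move to $x$, then to $x'$. (Moving to the current vertex means staying.) *)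

(* Defs.v *)
From mathcomp Require Import all_boot.
Set Implicit Arguments. Unset Strict Implicit. Unset Printing Implicit Defensive.

Section Spanner.
Variable V : finType.
(* parent function; the root r satisfies par r = r *)
Variable par : V -> V.
(* leftmost child c1(v); None iff v is a leaf *)
Variable c1 : V -> option V.
Variable k : nat.

Definition anc (a x : V) : bool := fconnect par x a.

Definition subtreeT (v : V) : {set V} := [set x | anc v x].

Definition tadj : rel V := fun x y => (x != y) && ((par x == y) || (par y == x)).

Definition on_path (x y z : V) : bool :=
  (anc z x || anc z y) && [forall w, (anc w x && anc w y) ==> anc w z].

(* connected component of x in the subgraph of T induced by S *)
Definition comp (S : {set V}) (x : V) : {set V} :=
  [set y in S | [forall z, on_path x y z ==> (z \in S)]].

(* root of a subtree R: its vertex closest to the root of T (r0 if R empty) *)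
Definition rt (r0 : V) (R : {set V}) : V :=
  odflt r0 [pick x in R | [forall y in R, anc x y]].

Definition Rsub (R : {set V}) (v : V) : {set V} := [set x in R | anc v x].

(* one step along leftmost edges inside R (stays put when impossible) *)
Definition lstep (R : {set V}) (x : V) : V :=
  match c1 x with Some c => if c \in R then c else x | None => x end.

(* P_R(v) as a sequence of vertices, and its last vertex l(v) *)
Definition Ppath (R : {set V}) (v : V) : seq V :=
  undup (traject (lstep R) v #|V|.+1).
Definition lR (R : {set V}) (v : V) : V := iter #|V| (lstep R) v.

(* v is d-balanced in R, for d = m / k (rational):
   |R_{c1 v}| <= |R| - m/k  <->  k * |R_{c1 v}| + m <= k * |R| *)
Definition balanced (m : nat) (R : {set V}) (v : V) : bool :=
  let s := match c1 v with
           | Some c => if c \in R then #|Rsub R c| else 0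
           | None => 0 end in
  k * s + m <= k * #|R|.

Definition bd (m : nat) (R : {set V}) (v : V) : option V :=
  ohead [seq x <- Ppath R v | balanced m R x].

(* CV(R, m/k), computed with fuel (fuel #|V|.+1 always suffices, since the
   size of the subtree strictly decreases at each recursive call) *)
Fixpoint CVf (r0 : V) (m : nat) (fuel : nat) (R : {set V}) : {set V} :=
  match fuel with
  | 0 => set0
  | f.+1 =>
    match bd m R (rt r0 R) with
    | None => set0
    | Some b => b |: \bigcup_(w in [set w in R | (w != b) && (par w == b)])
                       CVf r0 m f (Rsub R w)
    end
  end.

Definition CV (r0 : V) (m : nat) (R : {set V}) : {set V} := CVf r0 m #|V|.+1 R.

Definition Cset (r0 : V) (R : {set V}) : {set V} :=
  let m := #|R| in
  if m <= k.*2 + 2 (* i.e. k >= m/2 - 1 *) then R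
  else CV r0 (m) R :|: [set lR R (rt r0 R); rt r0 R].

Inductive canonical (r0 : V) : {set V} -> Prop :=
| canT : canonical r0 [set: V]
| canComp R x : canonical r0 R -> x \in R :\: Cset r0 R ->
                canonical r0 (comp (R :\: Cset r0 R) x).

End Spanner.

Definition rooted_tree (V : finType) (par : V -> V) (r : V) : Prop :=
  par r = r /\ forall x, anc par r x.

Definition leftmost_choice (V : finType) (par : V -> V) (c1 : V -> option V) : Prop :=
  forall v, match c1 v with
            | None => forall c, par c = v -> c = v
            | Some c => par c = v /\ c <> v /\
                forall c', par c' = v -> c' <> v ->
                  #|subtreeT par c'| <= #|subtreeT par c|
            end.

(* Main.v *)
Require Import Defs.
From mathcomp Require Import all_boot.

Lemma key (V : finType) (par : V -> V) (a : V) :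
  forall (p : seq V) (u : V), path (tadj par) u p -> uniq (u :: p) ->
  anc par a u -> ~~ anc par a (last u p) ->
  [/\ a \in u :: p, par a \in u :: p & index a (u :: p) < index (par a) (u :: p)].
Proof.
elim=> [|w p IH] u /=.
  by move=> _ _ ->.
case/andP=> /andP [nuw e] pth /andP [unin un] au nav.
have shift : forall b, b \in w :: p -> (u == b) = false.
  by move=> b bin; apply/negbTE; apply: contra unin => /eqP ->.
case/orP: e => /eqP e.
-
  rewrite /anc fconnect_eqVf in au.
  case/orP: au => [/eqP ua | au].
    subst a; rewrite e !inE eqxx /= eqxx /=.
    by rewrite eq_sym (negbTE nuw) orbT.
  rewrite /anc e in au.
  have [h1 h2 h3] := IH w pth un au nav.
  split; first by rewrite inE h1 orbT.
    by rewrite inE h2 orbT.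
  by rewrite (shift _ h1) (shift _ h2).
-
  have aw : anc par a w.
    by apply: connect_trans au; apply: connect1; rewrite /= e.
  have [h1 h2 h3] := IH w pth un aw nav.
  split; first by rewrite inE h1 orbT.
    by rewrite inE h2 orbT.
  by rewrite (shift _ h1) (shift _ h2).
Qed.

Theorem lemma10 (V : finType) (par : V -> V) (r : V) (c1 : V -> option V)
    (k : nat) :
  rooted_tree par r -> leftmost_choice par c1 -> 4 <= k ->
  forall (u v : V), ~~ anc par u v -> ~~ anc par v u ->
  forall R : {set V}, canonical par c1 k r R -> u \in Cset par c1 k r R ->
  (* T^u = R; X is empty *)
  [set x in Cset par c1 k r R | anc par x v && ~~ anc par x u] = set0 ->
  (* y is the highest vertex of Y *)
  forall y : V,
    y \in [set x in Cset par c1 k r R | anc par x u && ~~ anc par x v] ->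
    (forall x, x \in [set x in Cset par c1 k r R | anc par x u && ~~ anc par x v] ->
       anc par y x) ->
  (* P(u,v) is the (unique) simple path u :: p from u to v in T *)
  forall p : seq V, path (tadj par) u p -> last u p = v -> uniq (u :: p) ->
    [/\ y \in u :: p, par y \in u :: p &
        index u (u :: p) <= index y (u :: p) < index (par y) (u :: p)].
Proof.
move=> _ _ _ u v _ _ R _ _ _ y yY _ p pth lst un.
rewrite inE in yY; case/andP: yY => _ /andP [yu nyv].
have := @key _ par y p u pth un yu; rewrite lst => /(_ nyv) [h1 h2 h3].
by split=> //; rewrite h3 /= eqxx.
Qed.
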